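(* For every $\varphi\in\mathcal{L}_{AIL}$, the closure $cl(\varphi)$ is finite.
   Context: $\mathcal{L}_{AIL}$ over a countable set $\mathcal{P}$ of atoms and finite set $\mathcal{G}$ of agents: $\varphi::=p\mid\neg\varphi\mid\varphi\wedge\varphi\mid A_i\varphi\mid I_i\varphi\mid E_i\varphi\mid[\approx]_i\varphi\mid[\circ^+]_i\varphi$. $cl(\varphi)$ is the smallest set such that: (1) $\varphi\in cl(\varphi)$; (2) if $\psi\in cl(\varphi)$ then all subformulas of $\psi$ are in $cl(\varphi)$; (3) if $\psi\in cl(\varphi)$ and $\psi$ is not a negation, then $\neg\psi\in cl(\varphi)$; (4) if $A_i\psi\in cl(\varphi)$ then $A_i\chi\in cl(\varphi)$ for every subformula $\chi$ of $\psi$; (5) if $A_i\psi\in cl(\varphi)$ then $I_iA_i\psi$, $I_i\neg A_i\psi$, and $[\approx]_ip$ are in $cl(\varphi)$ for every atom $p$ that is a subformula of $\psi$; (6) if $I_i\psi\in cl(\varphi)$ and $\psi$ is of neither the form $I_i\chi$ nor $\neg I_i\chi$, then $I_iI_i\psi,I_i\neg I_i\psi\in cl(\varphi)$; (7) if $[\approx]_i\psi\in cl(\varphi)$ and $\psi$ is of neither the form $[\approx]_i\chi$ nor $\neg[\approx]_i\chi$, then $[\approx]_i[\approx]_i\psi,[\approx]_i\neg[\approx]_i\psi\in cl(\varphi)$; (8) if $[\circ^+]_i\psi\in cl(\varphi)$ then $[\approx]_iI_i[\circ^+]_i\psi\in cl(\varphi)$; (9) if $E_i\psi\in cl(\varphi)$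 then $A_i\psi,[\circ^+]_i\psi\in cl(\varphi)$. *)

(* Defs.v *)
From mathcomp Require Import all_boot.
From Stdlib Require Import List.

Set Implicit Arguments.
Unset Strict Implicit.

Section Syntax.
Variables (P : Type) (G : Type).

Inductive form : Type :=
| Atom  : P -> form
| Neg   : form -> form
| And   : form -> form -> form
| Aw    : G -> form -> form
| Iw    : G -> form -> form
| Ew    : G -> form -> form
| Sim   : G -> form -> form   (* [≈]_i *)
| Circ  : G -> form -> form.  (* [∘+]_i *)

Inductive isub : form -> form -> Prop :=
| isub_neg  : forall a, isub a (Neg a)
| isub_andl : forall a b, isub a (And a b)
| isub_andr : forall a b, isub b (And a b)
| isub_A    : forall i a, isub a (Aw i a)
| isub_I    : forall i a, isub a (Iw i a)
| isub_E    : forall i a, isub a (Ew i a)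
| isub_Sim  : forall i a, isub a (Sim i a)
| isub_Circ : forall i a, isub a (Circ i a).

Inductive subformula : form -> form -> Prop :=
| sub_refl : forall a, subformula a a
| sub_step : forall a b c, isub a b -> subformula b c -> subformula a c.

Inductive cl (phi : form) : form -> Prop :=
| cl1 : cl phi phi
| cl2 : forall psi chi, cl phi psi -> subformula chi psi -> cl phi chi
| cl3 : forall psi, cl phi psi -> (forall chi, psi <> Neg chi) -> cl phi (Neg psi)
| cl4 : forall i psi chi, cl phi (Aw i psi) -> subformula chi psi -> cl phi (Aw i chi)
| cl5a : forall i psi, cl phi (Aw i psi) -> cl phi (Iw i (Aw i psi))
| cl5b : forall i psi, cl phi (Aw i psi) -> cl phi (Iw i (Neg (Aw i psi)))
| cl5c : forall i psi p, cl phi (Aw i psi) -> subformula (Atom p) psi ->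
           cl phi (Sim i (Atom p))
| cl6a : forall i psi, cl phi (Iw i psi) ->
           (forall chi, psi <> Iw i chi) -> (forall chi, psi <> Neg (Iw i chi)) ->
           cl phi (Iw i (Iw i psi))
| cl6b : forall i psi, cl phi (Iw i psi) ->
           (forall chi, psi <> Iw i chi) -> (forall chi, psi <> Neg (Iw i chi)) ->
           cl phi (Iw i (Neg (Iw i psi)))
| cl7a : forall i psi, cl phi (Sim i psi) ->
           (forall chi, psi <> Sim i chi) -> (forall chi, psi <> Neg (Sim i chi)) ->
           cl phi (Sim i (Sim i psi))
| cl7b : forall i psi, cl phi (Sim i psi) ->
           (forall chi, psi <> Sim i chi) -> (forall chi, psi <> Neg (Sim i chi)) ->
           cl phi (Sim i (Neg (Sim i psi)))
| cl8 : forall i psi, cl phi (Circ i psi) -> cl phi (Sim i (Iw i (Circ i psi)))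
| cl9a : forall i psi, cl phi (Ew i psi) -> cl phi (Aw i psi)
| cl9b : forall i psi, cl phi (Ew i psi) -> cl phi (Circ i psi).

End Syntax.

Definition finite_set (T : Type) (S : T -> Prop) : Prop :=
  exists l : list T, forall x, S x -> List.In x l.

(* Main.v *)
Require Import Defs.
From mathcomp Require Import all_boot.
From Stdlib Require Import List.

Section Fin.
Variables (P G : Type).
Notation F := (form P G).

Fixpoint subs (f : F) : list F :=
  f :: match f with
       | Atom _ => nil
       | Neg a => subs a
       | And a b => List.app (subs a) (subs b)
       | Aw _ a | Iw _ a | Ew _ a | Sim _ a | Circ _ a => subs a
       end.

Lemma subs_self f : List.In f (subs f).
Proof. destruct f; simpl; auto. Qed.

Lemma subs_trans c b a : List.In b (subs c) -> List.In a (subs b) -> List.In a (subs c).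
Proof.
  induction c; simpl; intros H1 H2; destruct H1 as [<-|H1]; auto; right;
  try (apply in_app_iff in H1; apply in_app_iff; destruct H1; [left|right]; eauto; fail); eauto.
Qed.

Lemma isub_subs (a b : F) : isub a b -> List.In a (subs b).
Proof. intros H; destruct H; simpl; right; try apply in_app_iff; auto using subs_self. Qed.

Lemma subformula_subs (a b : F) : subformula a b -> List.In a (subs b).
Proof.
  induction 1. apply subs_self.
  eapply subs_trans; [exact IHsubformula| apply isub_subs; auto].
Qed.

Lemma subformula_trans (a b c : F) : subformula a b -> subformula b c -> subformula a c.
Proof. induction 1; intros; auto. eapply sub_step; eauto. Qed.

Lemma sub1 (a b : F) : isub a b -> subformula a b.
Proof. intros; eapply sub_step; [eassumption| apply Defs.sub_refl]. Qed.

Definition shapes (i : G) (X : F) : list F :=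
  Aw i X :: Circ i X :: Sim i X :: Iw i X ::
  Iw i (Aw i X) :: Iw i (Neg (Aw i X)) :: Iw i (Circ i X) :: Sim i (Iw i (Circ i X)) ::
  Iw i (Iw i X) :: Iw i (Neg (Iw i X)) ::
  Iw i (Iw i (Aw i X)) :: Iw i (Neg (Iw i (Aw i X))) ::
  Iw i (Iw i (Neg (Aw i X))) :: Iw i (Neg (Iw i (Neg (Aw i X)))) ::
  Iw i (Iw i (Circ i X)) :: Iw i (Neg (Iw i (Circ i X))) ::
  Sim i (Sim i X) :: Sim i (Neg (Sim i X)) ::
  Sim i (Sim i (Iw i (Circ i X))) :: Sim i (Neg (Sim i (Iw i (Circ i X)))) :: nil.

Variable phi : F.
Definition B (f : F) := subformula f phi.
Definition S0 (f : F) := B f \/ exists i X, B X /\ List.In f (shapes i X).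
Definition Good (f : F) := S0 f \/ exists g, S0 g /\ f = Neg g.

Lemma B_sub (a b : F) : B b -> subformula a b -> B a.
Proof. unfold B; intros; eapply subformula_trans; eauto. Qed.

Lemma B_isub (a b : F) : B b -> isub a b -> B a.
Proof. intros; eapply B_sub; eauto using sub1. Qed.

Ltac inshape := simpl; repeat first [left; reflexivity | right]; fail.
Ltac shp i X := left; right; exists i, X; split; [assumption | inshape].
Ltac neg g := right; exists g; split; [|reflexivity].

Lemma Good_isub (a b : F) : Good b -> isub a b -> Good a.
Proof.
  intros [[HB|[i [X [HX Hin]]]]|[g [[HB|[i [X [HX Hin]]]] ->]]] Hs.
  - left; left; eapply B_isub; eauto.
  - simpl in Hin; repeat destruct Hin as [<-|Hin]; inversion Hs; subst;
      first [ left; left; assumption | shp i X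
            | right; eexists; split; [|reflexivity]; right; exists i, X; split; [assumption|inshape] | contradiction | idtac ].
    all: try (left; left; assumption).
  - inversion Hs; subst; left; left; assumption.
  - inversion Hs; subst; left; right; exists i, X; split; assumption.
Qed.

Lemma Good_sub (a b : F) : subformula a b -> Good b -> Good a.
Proof. induction 1; auto. intros H1; exact (Good_isub _ _ (IHsubformula H1) H). Qed.


Ltac dgood H :=
  destruct H as [[?HB|[?j [?X [?HX ?Hin]]]]|[?g [_ ?Heq]]];
  [ | simpl in *; repeat match goal with
        | [ H : _ \/ _ |- _ ] => destruct H as [H|H]
        end;
      try discriminate; try contradiction;
      repeat match goal with
        | [ H : ?x = ?y |- _ ] =>
            first [ is_var x; subst x | is_var y; subst y
                  | discriminate H | injection H; clear H; intros ]
        end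
    | discriminate ].

Lemma L_A i (psi : F) : Good (Aw i psi) -> B psi.
Proof. intro H; dgood H; auto. eapply B_isub; [eassumption|constructor]. Qed.
Lemma L_C i (psi : F) : Good (Circ i psi) -> B psi.
Proof. intro H; dgood H; auto. eapply B_isub; [eassumption|constructor]. Qed.
Lemma L_E i (psi : F) : Good (Ew i psi) -> B psi.
Proof. intro H; dgood H; auto. eapply B_isub; [eassumption|constructor]. Qed.
Ltac dj := repeat first [left; reflexivity | right]; reflexivity.

Lemma L_I i (psi : F) : Good (Iw i psi) ->
  (forall chi, psi <> Iw i chi) -> (forall chi, psi <> Neg (Iw i chi)) ->
  exists X, B X /\ (psi = X \/ psi = Aw i X \/ psi = Neg (Aw i X) \/ psi = Circ i X).
Proof.
  intros H N1 N2; dgood H.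
  { exists psi; split; [apply (B_isub _ _ HB); constructor | auto]. }
  all: try (exfalso; eapply N1; reflexivity); try (exfalso; eapply N2; reflexivity).
  all: eexists; split; [eassumption| dj].
Qed.
Lemma L_S i (psi : F) : Good (Sim i psi) ->
  (forall chi, psi <> Sim i chi) -> (forall chi, psi <> Neg (Sim i chi)) ->
  exists X, B X /\ (psi = X \/ psi = Iw i (Circ i X)).
Proof.
  intros H N1 N2; dgood H.
  { exists psi; split; [apply (B_isub _ _ HB); constructor | auto]. }
  all: try (exfalso; eapply N1; reflexivity); try (exfalso; eapply N2; reflexivity).
  all: eexists; split; [eassumption| dj].
Qed.

Lemma cl_good (f : F) : cl phi f -> Good f.
Proof.
  induction 1.
  - left; left; apply Defs.sub_refl.
  - eapply Good_sub; eauto.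
  - destruct IHcl as [HS|[g [_ ->]]]; [right; exists psi; auto | exfalso; eapply H0; reflexivity].
  - apply L_A in IHcl. left; right; exists i, chi; split; [eapply B_sub; eauto | inshape].
  - apply L_A in IHcl. shp i psi.
  - apply L_A in IHcl. shp i psi.
  - apply L_A in IHcl. left; right; exists i, (Atom G p); split; [eapply B_sub; eauto | inshape].
  - destruct (L_I _ _ IHcl H0 H1) as [X [HX [ -> | [ -> | [ -> | -> ]]]]]; shp i X.
  - destruct (L_I _ _ IHcl H0 H1) as [X [HX [ -> | [ -> | [ -> | -> ]]]]]; shp i X.
  - destruct (L_S _ _ IHcl H0 H1) as [X [HX [ -> | -> ]]]; shp i X.
  - destruct (L_S _ _ IHcl H0 H1) as [X [HX [ -> | -> ]]]; shp i X.
  - apply L_C in IHcl. shp i psi.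
  - apply L_E in IHcl. shp i psi.
  - apply L_E in IHcl. shp i psi.
Qed.

End Fin.

Arguments subs {P G}.
Arguments shapes {P G}.
Arguments subformula_subs {P G}.
Arguments cl_good {P G phi f}.

Lemma in_seq_In (T : eqType) (x : T) (s : list T) : x \in s -> List.In x s.
Proof.
  elim: s => [|y s IH] //=. rewrite seq.in_cons => /orP [/eqP ->|H]; [left|right; apply IH]; auto.
Qed.

Theorem lemma5 (P : countType) (G : finType) (phi : form P G) :
  finite_set (cl phi).
Proof.
  set L0 := List.app (subs phi)
    (flat_map (fun i => flat_map (shapes i) (subs phi)) (enum G)).
  exists (List.app L0 (List.map (@Neg P G) L0)).
  move=> x /cl_good [HS|[g [HS ->]]]; apply in_app_iff; [left|right; apply in_map].
  all: case: HS => [HB|[i [X [HX Hin]]]]; apply in_app_iff;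
    [left; apply subformula_subs; exact HB
    |right; apply in_flat_map; exists i; split;
      [apply in_seq_In; apply mem_enum
      |apply in_flat_map; exists X; split; [apply subformula_subs; exact HX|exact Hin]]].
Qed.
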